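(* For all integers $0\le a<t\le T$, \[ \sum_{b=a}^{t-1}(\gamma\lambda)^{b-a}\,\delta'_{a,b}=G_a^{\lambda\mid t}-g(h_a;\theta_{a-1}), \] where for $a\le b\le T-1$, $\delta'_{a,b}=\frac{\partial L_{b+1}}{\partial h_a}+\gamma\, g(h_{b+1};\theta_b)^\top\frac{\partial h_{b+1}}{\partial h_a}-g(h_b;\theta_{b-1})^\top\frac{\partial h_b}{\partial h_a}$.
   Context: Fix integers $d,p,T\ge1$. Hidden states $h_0,\dots,h_T\in\mathbb{R}^d$ are produced by a recurrent network $h_t=f(x_t,h_{t-1})$ with $f$ differentiable and inputs fixed; losses $L_t=\ell_t(h_t)$, $1\le t\le T$, with $\ell_t$ differentiable. For $0\le s\le\tau\le T$, $\partial h_\tau/\partial h_s\in\mathbb{R}^{d\times d}$ is the Jacobian of $h_\tau$ as a function of $h_s$ through the recursion (identity if $\tau=s$); for $s<\tau$, $\partial L_\tau/\partial h_s\in\mathbb{R}^d$ is the gradient of $L_\tau$ as a function of $h_s$; for $v\in\mathbb{R}^d$, $v^\top\partial h_\tau/\partial h_s$ means $(\partial h_\tau/\partial h_s)^\top v$. Let $g:\mathbb{R}^d\times\mathbb{R}^p\to\mathbb{R}^d$ be any map (the synthesiser), $\gamma,\lambda\in[0,1]$, and let $\theta_{-1},\theta_0,\dots,\theta_{T-1}\in\mathbb{R}^p$ be an arbitrary sequence of weight vectors. Convention $0^0=1$. The $n$-step synthetic gradient, for $k\ge0$, $n\ge1$, $k+n\le T$, is $G_k^{(n)}=\sum_{\tau=1}^{n}\gamma^{\tau-1}\frac{\partial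 L_{k+\tau}}{\partial h_k}+\gamma^n g(h_{k+n};\theta_{k+n-1})^\top\frac{\partial h_{k+n}}{\partial h_k}$, and the interim $\lambda$-weighted synthetic gradient, for $0\le k<H\le T$, is $G_k^{\lambda\mid H}=(1-\lambda)\sum_{n=1}^{H-k-1}\lambda^{n-1}G_k^{(n)}+\lambda^{H-k-1}G_k^{(H-k)}$. An empty sum is zero. *)

(* Defs.v *)
From HB Require Import structures.
From mathcomp Require Import all_boot all_order all_algebra.
From mathcomp Require Import all_classical all_reals.
From mathcomp Require Import topology normedtype derive.
Set Implicit Arguments. Unset Strict Implicit. Unset Printing Implicit Defensive.
Import Order.TTheory GRing.Theory Num.Theory.
Import numFieldNormedType.Exports.
Local Open Scope ring_scope.

Section RNN.
Variables (R : realType) (d : nat) (X : Type).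
Variable f : X -> 'rV[R]_d -> 'rV[R]_d.   (* h_t = f (x t) h_{t-1} *)
Variable x : nat -> X.

(* flow s n h = h_{s+n} as a function of h_s = h, through the recursion. *)
Fixpoint flow (s n : nat) (h : 'rV[R]_d) : 'rV[R]_d :=
  match n with
  | 0 => h
  | n'.+1 => f (x (s + n'.+1)) (flow s n' h)
  end.

(* Jacobian (d x d matrix, usual convention: rows = outputs) of h_tau as a
   function of h_s, evaluated at hs.  The library's 'J is the matrix of the
   differential acting on row vectors (v *m 'J = dF(v)), i.e. the transpose. *)
Definition jac (s tau : nat) (hs : 'rV[R]_d) : 'M[R]_d :=
  (jacobian (flow s (tau - s)) hs)^T.

Definition grad (F : 'rV[R]_d -> R^o) (p : 'rV[R]_d) : 'rV[R]_d :=
  \row_i ('d F p) (delta_mx 0 i).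

Definition dL (ell : nat -> 'rV[R]_d -> R^o) (s tau : nat) (hs : 'rV[R]_d)
  : 'rV[R]_d := grad (fun h => ell tau (flow s (tau - s) h)) hs.

(* v^T (dh_tau/dh_s), as a row vector:  (J^T v)^T = v *m J. *)
Definition vJ (v : 'rV[R]_d) (s tau : nat) (hs : 'rV[R]_d) : 'rV[R]_d :=
  v *m jac s tau hs.

Variables (p : nat) (g : 'rV[R]_d -> 'rV[R]_p -> 'rV[R]_d).
Variable theta : int -> 'rV[R]_p.          (* theta_{-1}, theta_0, ... *)
Variables (ell : nat -> 'rV[R]_d -> R^o) (h : nat -> 'rV[R]_d) (gamma lambda : R).

Definition gk (k : nat) : 'rV[R]_d := g (h k) (theta (k%:Z - 1)).

Definition Gn (k n : nat) : 'rV[R]_d :=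
  \sum_(1 <= tau < n.+1) gamma ^+ (tau - 1) *: dL ell k (k + tau) (h k)
  + gamma ^+ n *: vJ (gk (k + n)) k (k + n) (h k).

Definition Glam (k H : nat) : 'rV[R]_d :=
  (1 - lambda) *: \sum_(1 <= n < H - k) lambda ^+ (n - 1) *: Gn k n
  + lambda ^+ (H - k - 1) *: Gn k (H - k).

Definition delta' (a b : nat) : 'rV[R]_d :=
  dL ell a b.+1 (h a) + gamma *: vJ (gk b.+1) a b.+1 (h a)
  - vJ (gk b) a b (h a).

End RNN.

(* Main.v *)
Require Import Defs.
From HB Require Import structures.
From mathcomp Require Import all_boot all_order all_algebra.
From mathcomp Require Import all_classical all_reals.
From mathcomp Require Import topology normedtype derive.
Import Order.TTheory GRing.Theory Num.Theory.
Import numFieldNormedType.Exports.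
Local Open Scope ring_scope.

Lemma jac_id (R : realType) (d : nat) (p : 'rV[R]_d) :
  jacobian (fun h : 'rV[R]_d => h) p = 1%:M.
Proof.
apply/row_matrixP => i; rewrite !rowE mul_rV_lin1 mulmx1.
have -> : 'd (fun h : 'rV[R]_d => h) p = id :> ('rV[R]_d -> 'rV[R]_d).
  by rewrite diff_val.
by [].
Qed.

Lemma zhelp (M : zmodType) (A B C E : M) : A + B + C = A + E + B + C - E.
Proof. by rewrite (addrAC A E) (addrAC (A+B) E) addrK. Qed.

Lemma lhelp (K : comRingType) (M : lmodType K) (l m : K) (S G1 G2 : M) :
  (1 - l) *: (S + m *: G1) + (l * m) *: G2 =
  (1 - l) *: S + m *: G1 + (l * m) *: (G2 - G1).
Proof.
by rewrite !scalerDr !scalerBl !scale1r scalerN scalerA !addrA [RHS]addrAC.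
Qed.

Lemma shelp (K : comRingType) (M : lmodType K) (c l g : K) (G D V1 V0 : M) :
  (c * l) *: (D + g *: V1 - V0) = l *: (G + c *: D + (c * g) *: V1 - c *: V0 - G).
Proof.
rewrite (addrAC _ (- (c *: V0))) (addrAC _ ((c * g) *: V1)) (addrAC G) subrr add0r.
by rewrite !scalerDr !scalerN !scalerA mulrA (mulrC l c).
Qed.

Theorem lemma4 (R : realType) (d p T : nat) (X : Type)
  (f : X -> 'rV[R]_d -> 'rV[R]_d) (x : nat -> X)
  (ell : nat -> 'rV[R]_d -> R^o) (h : nat -> 'rV[R]_d)
  (g : 'rV[R]_d -> 'rV[R]_p -> 'rV[R]_d) (theta : int -> 'rV[R]_p)
  (gamma lambda : R) :
  (0 < d)%N -> (0 < p)%N -> (0 < T)%N ->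
  (forall t (v : 'rV[R]_d), differentiable (f (x t)) v) ->
  (forall t (v : 'rV[R]_d), differentiable (ell t) v) ->
  (forall t, (1 <= t <= T)%N -> h t = f (x t) (h t.-1)) ->
  0 <= gamma <= 1 -> 0 <= lambda <= 1 ->
  forall a t : nat, (a < t <= T)%N ->
    \sum_(a <= b < t) (gamma * lambda) ^+ (b - a) *:
        delta' f x g theta ell h gamma a b
    = Glam f x g theta ell h gamma lambda a t
      - gk g theta h a.
Proof.
move=> _ _ _ _ _ _ _ _ a t /andP[Hat _].
set D := fun b => dL f x ell a b.+1 (h a).
set V := fun b => vJ f x (gk g theta h b) a b (h a).
have V0 : V a = gk g theta h a.
  by rewrite /V /vJ /jac subnn jac_id trmx1 mulmx1.
have GnS : forall n, Gn f x g theta ell h gamma a n.+1 =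
   Gn f x g theta ell h gamma a n + gamma ^+ n *: D (a + n)%N
   + gamma ^+ n.+1 *: V (a + n.+1)%N - gamma ^+ n *: V (a + n)%N.
  move=> n; rewrite /Gn big_nat_recr //= subn1 /= addnS.
  rewrite /D /V; exact: zhelp.
have GlamS : forall N, (0 < N)%N ->
   Glam f x g theta ell h gamma lambda a (a + N.+1) =
   Glam f x g theta ell h gamma lambda a (a + N) +
   lambda ^+ N *: (Gn f x g theta ell h gamma a N.+1 - Gn f x g theta ell h gamma a N).
  move=> N N0; rewrite /Glam !addKn big_nat_recr //= !subn1 /=.
  case: N N0 => // N _ /=.
  by rewrite exprS; apply: lhelp.
have -> : t = (a + (t - a))%N by rewrite subnKC // ltnW.
have : (0 < t - a)%N by rewrite subn_gt0.
elim: (t - a)%N => // N IH _.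
case: N IH => [_|N IH].
  rewrite addn1 big_nat1 subnn expr0 scale1r /Glam subSnn big_geq // scaler0 add0r subnn expr0 scale1r.
  rewrite -V0 /delta' /Gn big_nat1 subnn !expr0 scale1r expr1 addn1 //.
have dE : forall b, delta' f x g theta ell h gamma a b = D b + gamma *: V b.+1 - V b by [].
rewrite addnS big_nat_recr /=; last by rewrite leq_addr.
rewrite IH // -addnS (GlamS N.+1) // addrAC; congr (_ + _ - _).
rewrite dE GnS addKn (addnS a N.+1) exprMn (exprSr gamma N.+1); exact: shelp.
Qed.
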